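(* The projection $S_{12}$ consists precisely of the points $(d_1,d_2)\in\mathbb{R}^2$ such that $d_1\ge0$, $d_2\ge0$ and $d_1+d_2\le 3/4$.
   Context: For a finite graph $G$ and a $k$-vertex graph $H$, $d(H,G)$ is the probability that a uniformly random $k$-element subset of $V(G)$ induces a subgraph isomorphic to $H$. For $k\in\{0,1,2,3\}$ let $H_k$ be the 3-vertex graph with exactly $k$ edges. Let $S\subseteq\mathbb{R}^4$ be the set of all $(d_0,d_1,d_2,d_3)$ such that for every $\varepsilon>0$ and every $n\in\mathbb{N}$ there is a graph $G$ with at least $n$ vertices satisfying $|d(H_k,G)-d_k|\le\varepsilon$ for $k=0,1,2,3$. For $i<j$, $S_{ij}=\{(d_i,d_j):(d_0,d_1,d_2,d_3)\in S\}$. *)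

(* Defs.v *)
From Stdlib Require Import Reals Lra Lia List Arith.
Import ListNotations.
Open Scope R_scope.

(* A finite simple graph on vertex set {0, ..., gn - 1}: a symmetric,
   irreflexive boolean adjacency relation (values outside the vertex
   range are irrelevant). *)
Record graph : Type := Graph {
  gn : nat;
  gadj : nat -> nat -> bool;
  gadj_sym : forall i j, gadj i j = gadj j i;
  gadj_irr : forall i, gadj i i = false
}.

(* All 3-element subsets {i,j,k} of {0,...,n-1}, listed once each as i<j<k. *)
Definition triples (n : nat) : list (nat * nat * nat) :=
  flat_map (fun k => flat_map (fun j => map (fun i => (i, j, k)) (seq 0 j))
                               (seq 0 k))
           (seq 0 n).

Definition edges3 (G : graph) (t : nat * nat * nat) : nat :=
  let '(i, j, k) := t in
  Nat.b2n (gadj G i j) + Nat.b2n (gadj G i k) + Nat.b2n (gadj G j k).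

(* H_m = the 3-vertex graph with exactly m edges (unique up to isomorphism);
   a 3-set induces a copy of H_m iff it spans exactly m edges.
   dens G m = d(H_m, G): probability that a uniformly random 3-subset of V(G)
   induces a copy of H_m. *)
Definition dens (G : graph) (m : nat) : R :=
  INR (length (filter (fun t => Nat.eqb (edges3 G t) m) (triples (gn G))))
  / INR (length (triples (gn G))).

Definition inS (d0 d1 d2 d3 : R) : Prop :=
  forall eps : R, eps > 0 -> forall N : nat,
    exists G : graph, (N <= gn G)%nat /\
      Rabs (dens G 0 - d0) <= eps /\ Rabs (dens G 1 - d1) <= eps /\
      Rabs (dens G 2 - d2) <= eps /\ Rabs (dens G 3 - d3) <= eps.

Definition inS12 (d1 d2 : R) : Prop :=
  exists d0 d3 : R, inS d0 d1 d2 d3.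

(* Main.v *)
Require Import Defs.
From Stdlib Require Import Reals Lra Lia List Arith ZArith.
Import ListNotations.
Open Scope nat_scope.

Open Scope nat_scope.

Fixpoint sumn (n : nat) (f : nat -> nat) : nat :=
  match n with 0 => 0 | S n' => sumn n' f + f n' end.

Lemma sumn_ext n f g : (forall i, i < n -> f i = g i) -> sumn n f = sumn n g.
Proof. induction n; simpl; intros H; auto. rewrite IHn by (intros; apply H; lia). rewrite H by lia; auto. Qed.

Lemma sumn_add n f g : sumn n (fun i => f i + g i) = sumn n f + sumn n g.
Proof. induction n; simpl; lia. Qed.

Lemma sumn_mul_l n c f : sumn n (fun i => c * f i) = c * sumn n f.
Proof. induction n; simpl; nia. Qed.

Lemma sumn_const n c : sumn n (fun _ => c) = n * c.
Proof. induction n; simpl; lia. Qed.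

Lemma sumn_le n f g : (forall i, i < n -> f i <= g i) -> sumn n f <= sumn n g.
Proof. induction n; simpl; intros H; auto. specialize (IHn (fun i Hi => H i ltac:(lia))). specialize (H n ltac:(lia)). lia. Qed.

Lemma sumn_split a b f : sumn (a + b) f = sumn a f + sumn b (fun i => f (a + i)).
Proof. induction b; simpl. rewrite Nat.add_0_r; lia. rewrite Nat.add_succ_r; simpl. rewrite IHb. lia. Qed.

Lemma sumn_swap n m f : sumn n (fun i => sumn m (fun j => f i j)) = sumn m (fun j => sumn n (fun i => f i j)).
Proof. induction n; simpl. rewrite (sumn_const m 0); lia. rewrite IHn. rewrite <- sumn_add. auto. Qed.

Lemma length_filter_map {A} (p : A -> bool) (h : nat -> A) n :
  length (filter p (map h (seq 0 n))) = sumn n (fun i => Nat.b2n (p (h i))).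
Proof. induction n. reflexivity. rewrite seq_S, map_app, filter_app, length_app, IHn. simpl.
  destruct (p (h n)); simpl; lia. Qed.

Lemma length_filter_flat_map {A} (p : A -> bool) (F : nat -> list A) n :
  length (filter p (flat_map F (seq 0 n))) = sumn n (fun k => length (filter p (F k))).
Proof. induction n. reflexivity. rewrite seq_S, flat_map_app, filter_app, length_app, IHn. simpl.
  rewrite app_nil_r. lia. Qed.

Lemma triples_count p n : length (filter p (triples n)) =
  sumn n (fun k => sumn k (fun j => sumn j (fun i => Nat.b2n (p (i, j, k))))).
Proof. unfold triples. rewrite length_filter_flat_map. apply sumn_ext; intros k _.
  rewrite length_filter_flat_map. apply sumn_ext; intros j _. apply length_filter_map. Qed.

Definition bneq (i j : nat) : nat := if Nat.eqb i j then 0 else 1.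

Lemma pair_sym n g : sumn n (fun i => sumn n (fun j => bneq i j * g i j)) =
  sumn n (fun j => sumn j (fun i => g i j + g j i)).
Proof. induction n; simpl; auto.
  rewrite sumn_add. rewrite <- IHn.
  assert (E1: sumn n (fun i => bneq i n * g i n) = sumn n (fun i => g i n)).
  { apply sumn_ext; intros i Hi. unfold bneq. destruct (Nat.eqb_spec i n); lia. }
  assert (E2: sumn n (fun j => bneq n j * g n j) = sumn n (fun j => g n j)).
  { apply sumn_ext; intros i Hi. unfold bneq. destruct (Nat.eqb_spec n i); lia. }
  rewrite sumn_add, E1, E2.
  assert (Hn: bneq n n = 0) by (unfold bneq; rewrite Nat.eqb_refl; auto). rewrite Hn. change (sumn n (g n)) with (sumn n (fun j => g n j)). lia. Qed.

Definition D3 i j k := bneq i j * bneq i k * bneq j k.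
Definition S6 (f : nat -> nat -> nat -> nat) i j k :=
  f i j k + f i k j + f j i k + f j k i + f k i j + f k j i.

Lemma bneq_refl i : bneq i i = 0.
Proof. unfold bneq; rewrite Nat.eqb_refl; auto. Qed.

Lemma bneq_lt i n : i < n -> bneq i n = 1 /\ bneq n i = 1.
Proof. intros. unfold bneq. destruct (Nat.eqb_spec i n); destruct (Nat.eqb_spec n i); lia. Qed.

Lemma tri_sym n f :
  sumn n (fun i => sumn n (fun j => sumn n (fun k => D3 i j k * f i j k))) =
  sumn n (fun k => sumn k (fun j => sumn j (fun i => S6 f i j k))).
Proof.
  induction n. reflexivity.
  change (sumn (S n) ?h) with (sumn n h + h n).
  assert (EB : forall i, i < n ->
    sumn (S n) (fun j => sumn (S n) (fun k => D3 i j k * f i j k)) =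
    sumn n (fun j => sumn n (fun k => D3 i j k * f i j k)) +
    (sumn n (fun j => bneq i j * f i j n) +
     sumn n (fun k => bneq i k * f i n k))).
  { intros i Hi. simpl. rewrite sumn_add.
    assert (X1: sumn n (fun j => D3 i j n * f i j n) = sumn n (fun j => bneq i j * f i j n)).
    { apply sumn_ext; intros j Hj. unfold D3. destruct (bneq_lt i n Hi). destruct (bneq_lt j n Hj). 
      rewrite H, H1. lia. }
    assert (X2: sumn n (fun k => D3 i n k * f i n k) = sumn n (fun k => bneq i k * f i n k)).
    { apply sumn_ext; intros j Hj. unfold D3. destruct (bneq_lt i n Hi). destruct (bneq_lt j n Hj). 
      rewrite H, H2. lia. }
    assert (X3: D3 i n n = 0). { unfold D3. rewrite bneq_refl. lia. }
    rewrite X1, X2, X3. lia. }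
  assert (EN :
    sumn (S n) (fun j => sumn (S n) (fun k => D3 n j k * f n j k)) =
    sumn n (fun j => sumn n (fun k => bneq j k * f n j k))).
  { simpl. rewrite sumn_add.
    assert (X1: sumn n (fun j => D3 n j n * f n j n) = 0).
    { transitivity (sumn n (fun _ => 0)). apply sumn_ext; intros j Hj. unfold D3. rewrite bneq_refl. lia. rewrite sumn_const; lia. }
    assert (X2: sumn n (fun k => D3 n n k * f n n k) = 0).
    { transitivity (sumn n (fun _ => 0)). apply sumn_ext; intros j Hj. unfold D3. rewrite bneq_refl. lia. rewrite sumn_const; lia. }
    assert (X3: sumn n (fun j => sumn n (fun k => D3 n j k * f n j k)) = sumn n (fun j => sumn n (fun k => bneq j k * f n j k))).
    { apply sumn_ext; intros j Hj. apply sumn_ext; intros k Hk. unfold D3.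
      destruct (bneq_lt j n Hj). destruct (bneq_lt k n Hk). rewrite H0, H2. lia. }
    assert (X4: D3 n n n = 0). { unfold D3. rewrite bneq_refl. lia. }
    rewrite X1, X2, X3, X4. lia. }
  cbv beta. rewrite EN. rewrite (sumn_ext n _ _ EB). rewrite !sumn_add. rewrite IHn.
  rewrite (pair_sym n (fun i j => f i j n)).
  rewrite (pair_sym n (fun i k => f i n k)).
  rewrite (pair_sym n (fun j k => f n j k)).
  assert (R: sumn n (fun j => sumn j (fun i => S6 f i j n)) =
     sumn n (fun j => sumn j (fun i => f i j n + f j i n)) +
     sumn n (fun j => sumn j (fun i => f i n j + f j n i)) +
     sumn n (fun j => sumn j (fun i => f n i j + f n j i))).
  { rewrite <- !sumn_add. apply sumn_ext; intros j Hj. rewrite <- !sumn_add. apply sumn_ext; intros i Hi.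
    unfold S6. lia. }
  rewrite R. lia.
Qed.

Lemma sumn_bneq i n : sumn n (fun k => bneq i k) + (if i <? n then 1 else 0) = n.
Proof. induction n. reflexivity. simpl. unfold bneq at 2.
  destruct (Nat.eqb_spec i n); destruct (Nat.ltb_spec i n); destruct (Nat.ltb_spec i (S n)); lia. Qed.

Definition fb (G : graph) i j k := if Bool.eqb (gadj G i j) (gadj G i k) then 0 else 1.
Definition deg (G : graph) i := sumn (gn G) (fun k => Nat.b2n (gadj G i k)).

Lemma inner_k G i j : i < gn G ->
  sumn (gn G) (fun k => bneq i k * fb G i j k) =
  if gadj G i j then gn G - 1 - deg G i else deg G i.
Proof. intros Hi. pose proof (sumn_bneq i (gn G)) as Hb.
  destruct (Nat.ltb_spec i (gn G)); [|lia].
  assert (Hs: sumn (gn G) (fun k => bneq i k * (1 - Nat.b2n (gadj G i k))) + deg G i = gn G - 1).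
  { unfold deg. rewrite <- sumn_add. assert (Hb': sumn (gn G) (fun k => bneq i k) = gn G - 1) by lia. rewrite <- Hb'.
    apply sumn_ext; intros k Hk. unfold bneq. destruct (Nat.eqb_spec i k).
    subst. rewrite gadj_irr. simpl. lia. destruct (gadj G i k); simpl; lia. }
  destruct (gadj G i j) eqn:Eij.
  - transitivity (sumn (gn G) (fun k => bneq i k * (1 - Nat.b2n (gadj G i k)))); [|lia].
    apply sumn_ext; intros k Hk. unfold fb. rewrite Eij. destruct (gadj G i k); simpl; lia.
  - unfold deg. apply sumn_ext; intros k Hk. unfold fb, bneq. rewrite Eij.
    destruct (Nat.eqb_spec i k). subst. rewrite gadj_irr. simpl. lia. destruct (gadj G i k); simpl; lia.
Qed.

Lemma per_vertex G i : i < gn G ->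
  sumn (gn G) (fun j => sumn (gn G) (fun k => D3 i j k * fb G i j k)) <=
  2 * (deg G i * (gn G - 1 - deg G i)).
Proof. intros Hi.
  transitivity (sumn (gn G) (fun j => bneq i j * sumn (gn G) (fun k => bneq i k * fb G i j k))).
  { apply sumn_le; intros j Hj. rewrite <- sumn_mul_l. apply sumn_le; intros k Hk.
    unfold D3. assert (bneq j k <= 1) by (unfold bneq; destruct (j =? k); lia). nia. }
  pose proof (sumn_bneq i (gn G)) as Hb. destruct (Nat.ltb_spec i (gn G)); [|lia].
  assert (Hs: sumn (gn G) (fun k => bneq i k * (1 - Nat.b2n (gadj G i k))) + deg G i = gn G - 1).
  { unfold deg. rewrite <- sumn_add. assert (Hb': sumn (gn G) (fun k => bneq i k) = gn G - 1) by lia. rewrite <- Hb'.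
    apply sumn_ext; intros k Hk. unfold bneq. destruct (Nat.eqb_spec i k).
    subst. rewrite gadj_irr. simpl. lia. destruct (gadj G i k); simpl; lia. }
  set (d := deg G i) in *. set (m := gn G - 1 - d).
  assert (E: sumn (gn G) (fun j => bneq i j * sumn (gn G) (fun k => bneq i k * fb G i j k)) =
    sumn (gn G) (fun j => Nat.b2n (gadj G i j) * m + bneq i j * (1 - Nat.b2n (gadj G i j)) * d)).
  { apply sumn_ext; intros j Hj. rewrite inner_k by auto. unfold bneq. destruct (Nat.eqb_spec i j).
    subst. rewrite gadj_irr. simpl. lia. destruct (gadj G i j); simpl; lia. }
  rewrite E, sumn_add.
  assert (E1: sumn (gn G) (fun j => Nat.b2n (gadj G i j) * m) = d * m).
  { unfold d, deg. rewrite Nat.mul_comm. rewrite <- sumn_mul_l. apply sumn_ext; intros; lia. }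
  assert (E2: sumn (gn G) (fun j => bneq i j * (1 - Nat.b2n (gadj G i j)) * d) = m * d).
  { transitivity (m * d); [|lia]. unfold m. rewrite <- Hs, Nat.add_sub.
    rewrite Nat.mul_comm, <- sumn_mul_l. apply sumn_ext; intros; lia. }
  rewrite E1, E2. lia.
Qed.

Lemma S6_fb G i j k : S6 (fb G) i j k =
  4 * (Nat.b2n (edges3 G (i,j,k) =? 1) + Nat.b2n (edges3 G (i,j,k) =? 2)).
Proof. unfold S6, fb, edges3. rewrite (gadj_sym G j i), (gadj_sym G k i), (gadj_sym G k j).
  destruct (gadj G i j), (gadj G i k), (gadj G j k); reflexivity. Qed.

Definition Ncnt (G : graph) (m : nat) : nat :=
  length (filter (fun t => Nat.eqb (edges3 G t) m) (triples (gn G))).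

Lemma amgm d m : 4 * (d * (m - d)) <= m * m.
Proof. destruct (le_lt_dec d m). 
  - remember (m - d) as t. assert (m = d + t) by lia. subst m. replace (d + t - d) with t by lia.
    destruct (le_lt_dec d t). { remember (t - d) as u. assert (t = d + u) by lia. subst t. nia. } { remember (d - t) as u. assert (d = t + u) by lia. subst d. nia. }
  - replace (m - d) with 0 by lia. lia. Qed.

Lemma N12_bound G : 8 * (Ncnt G 1 + Ncnt G 2) <= gn G * ((gn G - 1) * (gn G - 1)).
Proof.
  assert (E: 4 * (Ncnt G 1 + Ncnt G 2) =
    sumn (gn G) (fun i => sumn (gn G) (fun j => sumn (gn G) (fun k => D3 i j k * fb G i j k)))).
  { rewrite tri_sym. unfold Ncnt. rewrite !triples_count. rewrite <- sumn_add, <- sumn_mul_l.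
    apply sumn_ext; intros k _. rewrite <- sumn_add, <- sumn_mul_l.
    apply sumn_ext; intros j _. rewrite <- sumn_add, <- sumn_mul_l.
    apply sumn_ext; intros i _. rewrite S6_fb. reflexivity. }
  assert (B: sumn (gn G) (fun i => sumn (gn G) (fun j => sumn (gn G) (fun k => D3 i j k * fb G i j k)))
     <= sumn (gn G) (fun i => 2 * (deg G i * (gn G - 1 - deg G i)))).
  { apply sumn_le; intros i Hi. apply per_vertex; auto. }
  assert (C: 2 * sumn (gn G) (fun i => 2 * (deg G i * (gn G - 1 - deg G i))) <=
     sumn (gn G) (fun _ => (gn G - 1) * (gn G - 1))).
  { rewrite <- sumn_mul_l. apply sumn_le; intros i Hi. pose proof (amgm (deg G i) (gn G - 1)). lia. }
  rewrite sumn_const in C. lia.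
Qed.

Lemma sum_id k : 2 * sumn k (fun j => j) = k * (k - 1).
Proof. induction k; simpl. lia. destruct k; simpl in *; nia. Qed.

Lemma length_triples n : 6 * length (triples n) = n * (n - 1) * (n - 2).
Proof.
  assert (H: length (triples n) = length (filter (fun _ => true) (triples n))).
  { induction (triples n); simpl; auto. }
  rewrite H, triples_count. cbn [Nat.b2n]. clear H.
  induction n. reflexivity.
  change (sumn (S n) ?h) with (sumn n h + h n); cbv beta.
  rewrite Nat.mul_add_distr_l, IHn.
  assert (Hk: sumn n (fun j => sumn j (fun _ => 1)) = sumn n (fun j => j)).
  { apply sumn_ext; intros j _. rewrite sumn_const; lia. }
  rewrite Hk. pose proof (sum_id n). destruct n. simpl. lia. destruct n. simpl. lia.
  replace (S (S n) - 1) with (S n) in * by lia. replace (S (S (S n)) - 1) with (S (S n)) by lia.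
  replace (S (S (S n)) - 2) with (S n) by lia. replace (S (S n) - 2) with n by lia. nia.
Qed.

Open Scope R_scope.

Lemma div_le_helper a b l : 0 < l -> a <= b * l -> a / l <= b.
Proof. intros Hl H. unfold Rdiv. apply (Rmult_le_reg_r l); [lra|].
  rewrite Rmult_assoc, Rinv_l, Rmult_1_r; lra. Qed.

Lemma le_div_helper a B c : 0 < c -> c * a <= B -> a <= B / c.
Proof. intros Hc H. unfold Rdiv. apply (Rmult_le_reg_l c); [lra|].
  replace (c * (B * / c)) with B by (field; lra). lra. Qed.

Lemma dens12_bound G : (3 <= gn G)%nat ->
  dens G 1 + dens G 2 <= 3/4 + 3 / (4 * (INR (gn G) - 2)).
Proof.
  intros H3. pose proof (N12_bound G) as HN. pose proof (length_triples (gn G)) as HL.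
  set (n := gn G) in *. set (L := length (triples n)) in *.
  assert (HZ: (4 * (n - 2) * (Ncnt G 1 + Ncnt G 2) <= 3 * (n - 1) * L)%nat).
  { assert (4 * (n-2) * (8 * (Ncnt G 1 + Ncnt G 2)) <= 4 * (n-2) * (n * ((n-1)*(n-1))))%nat by nia.
    nia. }
  apply le_INR in HZ. rewrite !mult_INR, plus_INR, !minus_INR in HZ by lia.
  assert (HL': (0 < INR L)). { apply lt_0_INR. nia. }
  assert (Hn: 3 <= INR n). { replace 3 with (INR 3) by (simpl; lra). apply le_INR; auto. }
  unfold dens. fold n. fold L.
  replace (INR (length (filter (fun t => edges3 G t =? 1)%nat (triples n))) / INR L +
    INR (length (filter (fun t => edges3 G t =? 2)%nat (triples n))) / INR L)
  with ((INR (Ncnt G 1) + INR (Ncnt G 2)) / INR L) by (unfold Ncnt; fold n; field; lra).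
  apply div_le_helper; auto.
  replace ((3/4 + 3 / (4 * (INR n - 2))) * INR L) with (3 * (INR n - 1) * INR L / (4 * (INR n - 2)))
    by (field; lra).
  apply le_div_helper; [lra|]. simpl in HZ. lra.
Qed.

Lemma dens_nonneg G m : 0 <= dens G m.
Proof. unfold dens. unfold Rdiv. apply Rmult_le_pos. apply pos_INR.
  destruct (Req_dec (INR (length (triples (gn G)))) 0) as [E|E].
  rewrite E, Rinv_0; lra. left. apply Rinv_0_lt_compat. pose proof (pos_INR (length (triples (gn G)))). lra. Qed.

Lemma abs_le x b : Rabs x <= b -> - b <= x <= b.
Proof. unfold Rabs; destruct (Rcase_abs x); lra. Qed.

Lemma forward d1 d2 : inS12 d1 d2 -> 0 <= d1 /\ 0 <= d2 /\ d1 + d2 <= 3/4.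
Proof.
  intros [d0 [d3 H]]. split; [|split].
  - destruct (Rle_lt_dec 0 d1) as [|Hlt]; auto.
    destruct (H (- d1 / 2) ltac:(lra) 0%nat) as [G [_ [_ [H1 _]]]].
    pose proof (dens_nonneg G 1). apply abs_le in H1. lra.
  - destruct (Rle_lt_dec 0 d2) as [|Hlt]; auto.
    destruct (H (- d2 / 2) ltac:(lra) 0%nat) as [G [_ [_ [_ [H1 _]]]]].
    pose proof (dens_nonneg G 2). apply abs_le in H1. lra.
  - destruct (Rle_lt_dec (d1 + d2) (3/4)) as [|Hlt]; auto.
    set (dl := d1 + d2 - 3/4).
    destruct (INR_unbounded (2 + 3 / dl)) as [n0 Hn0].
    destruct (H (dl / 4) ltac:(unfold dl; lra) (Nat.max n0 3)) as [G [HG [_ [H1 [H2 _]]]]].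
    apply abs_le in H1. apply abs_le in H2.
    assert (Hg3: (3 <= gn G)%nat) by lia.
    pose proof (dens12_bound G Hg3) as B.
    assert (Hm: INR n0 <= INR (gn G)) by (apply le_INR; lia).
    assert (Hdl: 0 < dl) by (unfold dl; lra).
    assert (Hq: 3 / dl * dl = 3) by (field; lra).
    assert (Hm2: 3 / dl < INR (gn G) - 2) by lra.
    assert (Hb: 3 / (4 * (INR (gn G) - 2)) <= dl / 4).
    { apply div_le_helper. assert (0 < 3/dl) by (apply Rdiv_lt_0_compat; lra). lra.
      nra. }
    unfold dl in *. lra.
Qed.

Open Scope nat_scope.

Fixpoint blk (l : list nat) (i : nat) : nat :=
  match l with [] => 0 | s :: l' => if i <? s then 0 else S (blk l' (i - s)) end.

Fixpoint sb (l : list nat) (psi : nat -> nat) : nat :=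
  match l with [] => 0 | s :: l' => s * psi 0 + sb l' (fun a => psi (S a)) end.

Fixpoint suml (l : list nat) : nat := match l with [] => 0 | s :: l' => s + suml l' end.

Lemma blk_sum l psi : sumn (suml l) (fun i => psi (blk l i)) = sb l psi.
Proof. revert psi. induction l as [|s l IH]; intros psi. reflexivity.
  simpl. rewrite sumn_split. rewrite <- IH. f_equal.
  - transitivity (sumn s (fun _ => psi 0)). apply sumn_ext; intros i Hi.
    destruct (Nat.ltb_spec i s); [auto|lia]. rewrite sumn_const; lia.
  - apply sumn_ext; intros i Hi. destruct (Nat.ltb_spec (s + i) s); [lia|].
    replace (s + i - s) with i by lia. reflexivity. Qed.

Lemma sb_sumn l psi : sb l psi = sumn (length l) (fun a => nth a l 0 * psi a).
Proof. revert psi. induction l as [|s l IH]; intros psi. reflexivity.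
  simpl length. simpl sb. rewrite IH.
  change (S (length l)) with (1 + length l). rewrite sumn_split. simpl. lia. Qed.

Lemma blk_lt l i : i < suml l -> blk l i < length l.
Proof. revert i. induction l as [|s l IH]; intros i Hi; simpl in *. lia.
  destruct (Nat.ltb_spec i s). lia. specialize (IH (i - s)). lia. Qed.

Section Blow.
Variable pat : nat -> nat -> bool.
Hypothesis pat_sym : forall a b, pat a b = pat b a.
Variable l : list nat.

Definition badj i j := andb (negb (i =? j)) (pat (blk l i) (blk l j)).
Lemma badj_sym i j : badj i j = badj j i.
Proof. unfold badj. rewrite Nat.eqb_sym, pat_sym. auto. Qed.
Lemma badj_irr i : badj i i = false.
Proof. unfold badj. rewrite Nat.eqb_refl. auto. Qed.

Definition bgraph : graph := Graph (suml l) badj badj_sym badj_irr.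

Definition hh a b c := Nat.b2n (pat a b) + Nat.b2n (pat a c) + Nat.b2n (pat b c).

Definition Fcnt m := sumn (length l) (fun a => nth a l 0 * sumn (length l) (fun b => nth b l 0 *
   sumn (length l) (fun c => nth c l 0 * Nat.b2n (hh a b c =? m)))).

Lemma S6_const (G : graph) m i j k :
  S6 (fun i j k => Nat.b2n (edges3 G (i,j,k) =? m)) i j k = 6 * Nat.b2n (edges3 G (i,j,k) =? m).
Proof. unfold S6, edges3. rewrite (gadj_sym G j i), (gadj_sym G k i), (gadj_sym G k j).
  destruct (gadj G i j), (gadj G i k), (gadj G j k); simpl; lia. Qed.

Lemma count_bounds m : let n := suml l in
  6 * Ncnt bgraph m <= Fcnt m /\ Fcnt m <= 6 * Ncnt bgraph m + 3 * (n * n).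
Proof.
  intros n.
  set (phi := fun i j k => Nat.b2n (hh (blk l i) (blk l j) (blk l k) =? m)).
  assert (HF: Fcnt m = sumn n (fun i => sumn n (fun j => sumn n (fun k => phi i j k)))).
  { unfold Fcnt, phi, n. symmetry.
    rewrite (sumn_ext _ _ (fun i => sumn (suml l) (fun j => sumn (length l) (fun c => nth c l 0 *
       Nat.b2n (hh (blk l i) (blk l j) c =? m))))).
    2:{ intros i _. apply sumn_ext; intros j _.
        rewrite (blk_sum l (fun c => Nat.b2n (hh (blk l i) (blk l j) c =? m))). apply sb_sumn. }
    rewrite (sumn_ext _ _ (fun i => sumn (length l) (fun b => nth b l 0 * sumn (length l) (fun c => nth c l 0 *
       Nat.b2n (hh (blk l i) b c =? m))))).
    2:{ intros i _. 
        rewrite (blk_sum l (fun b => sumn (length l) (fun c => nth c l 0 * Nat.b2n (hh (blk l i) b c =? m)))). apply sb_sumn. }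
    rewrite (blk_sum l (fun a => sumn (length l) (fun b => nth b l 0 * sumn (length l) (fun c => nth c l 0 *
       Nat.b2n (hh a b c =? m))))). apply sb_sumn. }
  assert (HN: 6 * Ncnt bgraph m = sumn n (fun i => sumn n (fun j => sumn n (fun k => D3 i j k * phi i j k)))).
  { unfold Ncnt. rewrite triples_count. rewrite <- sumn_mul_l.
    transitivity (sumn n (fun i => sumn n (fun j => sumn n (fun k => D3 i j k * 
        Nat.b2n (edges3 bgraph (i,j,k) =? m))))).
    - rewrite tri_sym. apply sumn_ext; intros k _. rewrite <- sumn_mul_l. apply sumn_ext; intros j _.
      rewrite <- sumn_mul_l. apply sumn_ext; intros i _. rewrite S6_const. reflexivity.
    - apply sumn_ext; intros i _. apply sumn_ext; intros j _. apply sumn_ext; intros k _.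
      unfold D3, bneq, phi, edges3, hh. simpl. unfold badj.
      destruct (Nat.eqb_spec i j), (Nat.eqb_spec i k), (Nat.eqb_spec j k); simpl; lia. }
  assert (HD: sumn n (fun i => sumn n (fun j => sumn n (fun k => D3 i j k))) = n * (n - 1) * (n - 2)).
  { rewrite <- length_triples.
    assert (length (triples n) = length (filter (fun _ => true) (triples n))).
    { induction (triples n); simpl; auto. }
    rewrite H, triples_count.
    transitivity (sumn n (fun i => sumn n (fun j => sumn n (fun k => D3 i j k * 1)))).
    { apply sumn_ext; intros; apply sumn_ext; intros; apply sumn_ext; intros; lia. }
    rewrite (tri_sym n (fun _ _ _ => 1)). rewrite <- sumn_mul_l. apply sumn_ext; intros k _. rewrite <- sumn_mul_l. apply sumn_ext; intros j _.
    rewrite <- sumn_mul_l. apply sumn_ext; intros i _. unfold S6. simpl. lia. }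
  assert (HT: sumn n (fun i => sumn n (fun j => sumn n (fun k => D3 i j k))) +
              sumn n (fun i => sumn n (fun j => sumn n (fun k => 1 - D3 i j k))) = n * (n * n)).
  { rewrite <- sumn_add. transitivity (sumn n (fun _ => n * n)); [|apply sumn_const]. apply sumn_ext; intros i _.
    rewrite <- sumn_add. transitivity (sumn n (fun _ => n)); [|apply sumn_const]. apply sumn_ext; intros j _.
    rewrite <- sumn_add. transitivity (sumn n (fun _ => 1)); [|rewrite sumn_const; lia]. apply sumn_ext; intros k _.
    unfold D3, bneq. destruct (j =? k), (i =? j), (i =? k); simpl; lia. }
  assert (HS: sumn n (fun i => sumn n (fun j => sumn n (fun k => phi i j k))) =
              sumn n (fun i => sumn n (fun j => sumn n (fun k => D3 i j k * phi i j k))) +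
              sumn n (fun i => sumn n (fun j => sumn n (fun k => (1 - D3 i j k) * phi i j k)))).
  { rewrite <- sumn_add. apply sumn_ext; intros i _.
    rewrite <- sumn_add. apply sumn_ext; intros j _.
    rewrite <- sumn_add. apply sumn_ext; intros k _.
    unfold D3, bneq. destruct (j =? k), (i =? j), (i =? k); simpl; lia. }
  assert (HL: sumn n (fun i => sumn n (fun j => sumn n (fun k => (1 - D3 i j k) * phi i j k))) <=
              sumn n (fun i => sumn n (fun j => sumn n (fun k => 1 - D3 i j k)))).
  { apply sumn_le; intros i _; apply sumn_le; intros j _; apply sumn_le; intros k _.
    unfold phi. destruct (hh _ _ _ =? m); simpl; lia. }
  assert (n * (n * n) <= n * (n - 1) * (n - 2) + 3 * (n * n)).
  { destruct n. lia. destruct n. lia. simpl. nia. }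
  lia.
Qed.
End Blow.

Open Scope R_scope.

Fixpoint sumR (n : nat) (f : nat -> R) : R :=
  match n with O => 0 | S n' => sumR n' f + f n' end.

Lemma sumR_ext n f g : (forall i, (i < n)%nat -> f i = g i) -> sumR n f = sumR n g.
Proof. induction n; simpl; intros H; auto. rewrite IHn by (intros; apply H; lia). rewrite H by lia; auto. Qed.

Lemma sumR_plus n f g : sumR n (fun i => f i + g i) = sumR n f + sumR n g.
Proof. induction n; simpl; lra. Qed.

Lemma sumR_minus n f g : sumR n (fun i => f i - g i) = sumR n f - sumR n g.
Proof. induction n; simpl; lra. Qed.

Lemma sumR_mul_l n c f : sumR n (fun i => c * f i) = c * sumR n f.
Proof. induction n; simpl; try rewrite IHn; lra. Qed.

Lemma sumR_le n f g : (forall i, (i < n)%nat -> f i <= g i) -> sumR n f <= sumR n g.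
Proof. induction n; simpl; intros H. lra. specialize (IHn (fun i Hi => H i ltac:(lia))). specialize (H n ltac:(lia)). lra. Qed.

Lemma sumR_abs n f g : (forall i, (i < n)%nat -> Rabs (f i) <= g i) -> Rabs (sumR n f) <= sumR n g.
Proof. induction n; simpl; intros H. rewrite Rabs_R0; lra.
  eapply Rle_trans. apply Rabs_triang. specialize (IHn (fun i Hi => H i ltac:(lia))). specialize (H n ltac:(lia)). lra. Qed.

Lemma INR_sumn n f : INR (sumn n f) = sumR n (fun i => INR (f i)).
Proof. induction n; simpl; auto. rewrite plus_INR, IHn. auto. Qed.

Definition T (K : nat) (x : nat -> R) (w : nat -> nat -> nat -> R) : R :=
  sumR K (fun a => x a * sumR K (fun b => x b * sumR K (fun c => x c * w a b c))).

Lemma T_scale K x w r : T K (fun a => r * x a) w = r * r * r * T K x w.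
Proof. unfold T.
  assert (H2: forall a b, sumR K (fun c => r * x c * w a b c) = r * sumR K (fun c => x c * w a b c)).
  { intros. rewrite <- sumR_mul_l. apply sumR_ext; intros; ring. }
  assert (H3: forall a, sumR K (fun b => r * x b * sumR K (fun c => r * x c * w a b c)) =
      (r * r) * sumR K (fun b => x b * sumR K (fun c => x c * w a b c))).
  { intros. rewrite <- sumR_mul_l. apply sumR_ext; intros. rewrite H2. ring. }
  rewrite <- sumR_mul_l. apply sumR_ext; intros. rewrite H3. ring. Qed.

Section Pert.
Variable K : nat.
Variables x y : nat -> R.
Hypothesis xpos : forall a, (a < K)%nat -> 0 <= x a.
Hypothesis ypos : forall a, (a < K)%nat -> 0 <= y a.
Hypothesis xsum : sumR K x <= 1.
Hypothesis ysum : sumR K y <= 1.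
Let E := sumR K (fun a => Rabs (y a - x a)).

Lemma level_bound (F : nat -> R) : (forall a, (a < K)%nat -> 0 <= F a <= 1) ->
  0 <= sumR K (fun a => y a * F a) <= 1.
Proof. intros HF. split.
  - rewrite <- (Rmult_0_l 0) at 1. replace (0*0) with (sumR K (fun _ => 0)) by (clear; induction K; simpl; lra).
    apply sumR_le; intros a Ha. specialize (HF a Ha). specialize (ypos a Ha). nra.
  - eapply Rle_trans; [|apply ysum]. apply sumR_le; intros a Ha. specialize (HF a Ha). specialize (ypos a Ha). nra.
Qed.

Lemma level_bound_x (F : nat -> R) : (forall a, (a < K)%nat -> 0 <= F a <= 1) ->
  0 <= sumR K (fun a => x a * F a) <= 1.
Proof. intros HF. split.
  - replace 0 with (sumR K (fun _ => 0)) by (clear; induction K; simpl; lra).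
    apply sumR_le; intros a Ha. specialize (HF a Ha). specialize (xpos a Ha). nra.
  - eapply Rle_trans; [|apply xsum]. apply sumR_le; intros a Ha. specialize (HF a Ha). specialize (xpos a Ha). nra.
Qed.

Lemma level_pert (F G : nat -> R) d : (forall a, (a < K)%nat -> 0 <= F a <= 1) ->
  (forall a, (a < K)%nat -> Rabs (F a - G a) <= d) -> 0 <= d ->
  Rabs (sumR K (fun a => y a * F a) - sumR K (fun a => x a * G a)) <= E + d.
Proof. intros HF HG Hd. rewrite <- sumR_minus.
  eapply Rle_trans. apply (sumR_abs K _ (fun a => Rabs (y a - x a) + x a * d)).
  - intros a Ha. replace (y a * F a - x a * G a) with ((y a - x a) * F a + x a * (F a - G a)) by ring.
    eapply Rle_trans. apply Rabs_triang. rewrite !Rabs_mult. specialize (HF a Ha). specialize (HG a Ha).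
    specialize (xpos a Ha). rewrite (Rabs_right (x a)) by lra. rewrite (Rabs_right (F a)) by lra.
    pose proof (Rabs_pos (y a - x a)). nra.
  - rewrite sumR_plus. unfold E. rewrite (sumR_ext K (fun a => x a * d) (fun a => d * x a)) by (intros; ring).
    rewrite sumR_mul_l. nra.
Qed.

Lemma E_nonneg : 0 <= E.
Proof. unfold E. replace 0 with (sumR K (fun _ => 0)) by (clear; induction K; simpl; lra).
  apply sumR_le; intros; apply Rabs_pos. Qed.

Lemma T_pert w : (forall a b c, (a < K)%nat -> (b < K)%nat -> (c < K)%nat -> 0 <= w a b c <= 1) ->
  Rabs (T K y w - T K x w) <= 3 * E.
Proof. intros Hw. pose proof E_nonneg.
  assert (L1: forall a b, (a < K)%nat -> (b < K)%nat ->
    Rabs (sumR K (fun c => y c * w a b c) - sumR K (fun c => x c * w a b c)) <= E + 0).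
  { intros a b Ha Hb. apply level_pert; intros; auto with real. rewrite Rminus_diag, Rabs_R0. lra. }
  assert (L2: forall a, (a < K)%nat ->
    Rabs (sumR K (fun b => y b * sumR K (fun c => y c * w a b c)) - sumR K (fun b => x b * sumR K (fun c => x c * w a b c))) <= E + (E + 0)).
  { intros a Ha. apply level_pert; intros; auto. apply level_bound; auto. lra. }
  unfold T. replace (3 * E) with (E + (E + (E + 0))) by ring.
  apply level_pert; intros; auto.
  apply level_bound. intros. apply level_bound; auto. lra.
Qed.
End Pert.

Open Scope R_scope.

Lemma arith_err c F D n : 0 < n -> 0 < D -> D <= n*n*n -> n*n*n - D <= 3*(n*n) ->
  0 <= c -> c <= D -> c <= F -> F <= c + 3*(n*n) ->
  Rabs (c / D - F / (n*n*n)) <= 3 / n.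
Proof. intros Hn HD HDp Hp Hc HcD HcF HF.
  set (p := n*n*n) in *. assert (Hp0: 0 < p) by (unfold p; apply Rmult_lt_0_compat; [nra|lra]).
  assert (E1: c / D - c / p = c * (p - D) * / (D * p)) by (field; lra).
  assert (Hinv: 0 < / (D * p)) by (apply Rinv_0_lt_compat; nra).
  assert (B1: 0 <= c * (p - D) * / (D * p)).
  { apply Rmult_le_pos; [|lra]. nra. }
  assert (B2: c * (p - D) * / (D * p) <= 3 / n).
  { apply Rle_trans with (D * (p - D) * / (D * p)). apply Rmult_le_compat_r; [lra|]. nra.
    replace (D * (p - D) * / (D * p)) with ((p - D) / p) by (field; lra).
    replace (3 / n) with (3 * (n*n) / p) by (unfold p; field; lra).
    unfold Rdiv. apply Rmult_le_compat_r. left; apply Rinv_0_lt_compat; lra. lra. }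
  assert (B3: F / p - c / p <= 3 / n).
  { replace (F / p - c / p) with ((F - c) / p) by (field; lra).
    replace (3 / n) with (3 * (n*n) / p) by (unfold p; field; lra).
    unfold Rdiv. apply Rmult_le_compat_r. left; apply Rinv_0_lt_compat; lra. lra. }
  assert (B4: c / p <= F / p).
  { unfold Rdiv. apply Rmult_le_compat_r. left; apply Rinv_0_lt_compat; lra. lra. }
  apply Rabs_le. split; lra.
Qed.

Lemma T_ext K x y w : (forall a, x a = y a) -> T K x w = T K y w.
Proof. intros H. unfold T. apply sumR_ext; intros a _. rewrite H. f_equal.
  apply sumR_ext; intros b _. rewrite H. f_equal. apply sumR_ext; intros c _. rewrite H. auto. Qed.

Definition wm (pat : nat -> nat -> bool) m a b c : R := INR (Nat.b2n (hh pat a b c =? m)).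

Lemma filter_len_le {A} (p : A -> bool) l : (length (filter p l) <= length l)%nat.
Proof. induction l; simpl; auto. destruct (p a); simpl; lia. Qed.

Lemma dens_approx pat (ps : forall a b, pat a b = pat b a) l m :
  (3 <= suml l)%nat ->
  Rabs (dens (bgraph pat ps l) m - T (length l) (fun a => INR (nth a l 0%nat) / INR (suml l)) (wm pat m))
    <= 3 / INR (suml l).
Proof.
  intros H3. set (n := suml l) in *.
  destruct (count_bounds pat ps l m) as [C1 C2]. fold n in C2.
  pose proof (length_triples n) as HL.
  assert (HNL: (Ncnt (bgraph pat ps l) m <= length (triples n))%nat) by (apply filter_len_le).
  assert (HF: INR (Fcnt pat l m) = T (length l) (fun a => INR (nth a l 0%nat)) (wm pat m)).
  { unfold Fcnt, T. rewrite INR_sumn. apply sumR_ext; intros a _. rewrite mult_INR, INR_sumn. f_equal.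
    apply sumR_ext; intros b _. rewrite mult_INR, INR_sumn. f_equal.
    apply sumR_ext; intros c _. rewrite mult_INR. reflexivity. }
  assert (Hn: 3 <= INR n) by (replace 3 with (INR 3) by (simpl; lra); apply le_INR; auto).
  assert (HT: T (length l) (fun a => INR (nth a l 0%nat) / INR n) (wm pat m) =
              INR (Fcnt pat l m) / (INR n * INR n * INR n)).
  { transitivity (T (length l) (fun a => / INR n * INR (nth a l 0%nat)) (wm pat m)).
    apply T_ext; intros; unfold Rdiv; ring.
    rewrite T_scale, HF. field. lra. }
  rewrite HT.
  assert (Lp: (0 < length (triples n))%nat).
  { remember (n - 3)%nat as k. assert (n = (k + 3)%nat) by lia. rewrite H in HL.
    replace (k + 3 - 1)%nat with (k + 2)%nat in HL by lia. replace (k + 3 - 2)%nat with (k + 1)%nat in HL by lia.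
    assert ((k + 3) * (k + 2) * (k + 1) >= 6)%nat by (apply (Nat.le_trans _ (3*2*1)); [simpl; lia|]; repeat apply Nat.mul_le_mono; lia).
    rewrite H; lia. }
  assert (HD: dens (bgraph pat ps l) m = INR (6 * Ncnt (bgraph pat ps l) m) / INR (6 * length (triples n))).
  { unfold dens. rewrite !mult_INR. simpl gn. fold n. unfold Ncnt. simpl gn. fold n. field.
    split; apply not_0_INR; lia. }
  rewrite HD.
  assert (HDr: INR (6 * length (triples n)) = INR n * (INR n - 1) * (INR n - 2)).
  { rewrite HL, !mult_INR, !minus_INR by lia. simpl. lra. }
  assert (Hc: INR (6 * Ncnt (bgraph pat ps l) m) <= INR (6 * length (triples n))) by (apply le_INR; lia).
  rewrite HDr in Hc.
  apply le_INR in C1. apply le_INR in C2. rewrite plus_INR in C2. rewrite (mult_INR 3) in C2.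
  rewrite (mult_INR n n) in C2. replace (INR 3) with 3 in C2 by (simpl; lra).
  pose proof (pos_INR (6 * Ncnt (bgraph pat ps l) m)).
  apply arith_err; try lra; nra.
Qed.

Open Scope R_scope.

Definition pat5 (a b : nat) : bool :=
  match a, b with
  | 0, 0 | 1, 1 | 0, 2 | 2, 0 | 1, 3 | 3, 1 | 2, 3 | 3, 2 => true
  | _, _ => false end%nat.

Lemma pat5_sym a b : pat5 a b = pat5 b a.
Proof. destruct a as [|[|[|[|a]]]]; destruct b as [|[|[|[|b]]]]; reflexivity. Qed.

Definition xf (x0 x1 x2 x3 x4 : R) (a : nat) : R :=
  match a with 0 => x0 | 1 => x1 | 2 => x2 | 3 => x3 | _ => x4 end%nat.

Definition PP m x0 x1 x2 x3 x4 := T 5 (xf x0 x1 x2 x3 x4) (wm pat5 m).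

Definition fl (r : R) : nat := Z.to_nat (Int_part r).

Lemma fl_spec r : 0 <= r -> INR (fl r) <= r /\ r < INR (fl r) + 1.
Proof. intros Hr. destruct (base_Int_part r) as [H1 H2].
  assert (Hz: (0 <= Int_part r)%Z).
  { destruct (Z_lt_le_dec (Int_part r) 0); auto. assert (Hm: (Int_part r <= -1)%Z) by lia.
    apply IZR_le in Hm. lra. }
  unfold fl. rewrite INR_IZR_INZ, Z2Nat.id by auto. lra. Qed.

Lemma wm_bound m a b c : 0 <= wm pat5 m a b c <= 1.
Proof. unfold wm. destruct (hh pat5 a b c =? m)%nat; simpl; lra. Qed.

Lemma blow_inS x0 x1 x2 x3 x4 : 0 <= x0 -> 0 <= x1 -> 0 <= x2 -> 0 <= x3 -> 0 <= x4 ->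
  x0 + x1 + x2 + x3 + x4 = 1 ->
  inS (PP 0 x0 x1 x2 x3 x4) (PP 1 x0 x1 x2 x3 x4) (PP 2 x0 x1 x2 x3 x4) (PP 3 x0 x1 x2 x3 x4).
Proof.
  intros H0 H1 H2 H3 H4 Hs.
  assert (key: forall n : nat, (3 <= n)%nat -> exists G : graph, gn G = n /\
     forall m, Rabs (dens G m - PP m x0 x1 x2 x3 x4) <= 27 / INR n).
  { intros n Hn. set (r := INR n).
    assert (Hr: 3 <= r) by (unfold r; replace 3 with (INR 3) by (simpl; lra); apply le_INR; auto).
    set (f0 := fl (x0 * r)). set (f1 := fl (x1 * r)). set (f2 := fl (x2 * r)). set (f3 := fl (x3 * r)).
    destruct (fl_spec (x0 * r)) as [A0 B0]; [nra|]. destruct (fl_spec (x1 * r)) as [A1 B1]; [nra|].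
    destruct (fl_spec (x2 * r)) as [A2 B2]; [nra|]. destruct (fl_spec (x3 * r)) as [A3 B3]; [nra|].
    fold f0 f1 f2 f3 in A0, B0, A1, B1, A2, B2, A3, B3.
    assert (HS: (f0 + f1 + f2 + f3 <= n)%nat).
    { apply INR_le. rewrite !plus_INR. fold r. nra. }
    set (l := [f0; f1; f2; f3; (n - (f0 + f1 + f2 + f3))%nat]).
    assert (Hl: suml l = n) by (simpl; lia).
    exists (bgraph pat5 pat5_sym l). split. simpl. auto.
    intros m. pose proof (dens_approx pat5 pat5_sym l m) as DA. rewrite Hl in DA. specialize (DA Hn).
    set (y := fun a => INR (nth a l 0%nat) / INR n) in DA.
    assert (HS': INR (n - (f0 + f1 + f2 + f3)) = r - (INR f0 + INR f1 + INR f2 + INR f3)).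
    { rewrite minus_INR by auto. rewrite !plus_INR. auto. }
    assert (TP: Rabs (T 5 y (wm pat5 m) - T 5 (xf x0 x1 x2 x3 x4) (wm pat5 m)) <=
       3 * sumR 5 (fun a => Rabs (y a - xf x0 x1 x2 x3 x4 a))).
    { apply T_pert.
      - intros a Ha. destruct a as [|[|[|[|[|a]]]]]; simpl; lra.
      - intros a Ha. unfold y. apply Rmult_le_pos. apply pos_INR. left; apply Rinv_0_lt_compat; fold r; lra.
      - simpl. lra.
      - unfold y. simpl. rewrite HS'. fold r. right. field. lra.
      - intros. apply wm_bound. }
    assert (HE: sumR 5 (fun a => Rabs (y a - xf x0 x1 x2 x3 x4 a)) <= 8 / r).
    { unfold y. simpl. rewrite HS'. fold r.
      assert (E: forall f x, INR f <= x * r -> x * r < INR f + 1 -> Rabs (INR f / r - x) <= 1 / r).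
      { intros f x Ha Hb. apply Rabs_le. split.
        - apply (Rmult_le_reg_r r); [lra|]. replace ((INR f / r - x) * r) with (INR f - x * r) by (field; lra).
          replace (- (1 / r) * r) with (-1) by (field; lra). lra.
        - apply (Rmult_le_reg_r r); [lra|]. replace ((INR f / r - x) * r) with (INR f - x * r) by (field; lra).
          replace (1 / r * r) with 1 by (field; lra). lra. }
      pose proof (E _ _ A0 B0). pose proof (E _ _ A1 B1). pose proof (E _ _ A2 B2). pose proof (E _ _ A3 B3).
      assert (E4: Rabs ((r - (INR f0 + INR f1 + INR f2 + INR f3)) / r - x4) <= 4 / r).
      { replace x4 with (1 - x0 - x1 - x2 - x3) by lra.
        replace ((r - (INR f0 + INR f1 + INR f2 + INR f3)) / r - (1 - x0 - x1 - x2 - x3)) with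
          (- ((INR f0 / r - x0) + (INR f1 / r - x1) + (INR f2 / r - x2) + (INR f3 / r - x3))) by (field; lra).
        rewrite Rabs_Ropp. eapply Rle_trans. apply Rabs_triang. eapply Rle_trans. apply Rplus_le_compat_r. apply Rabs_triang.
        eapply Rle_trans. apply Rplus_le_compat_r. apply Rplus_le_compat_r. apply Rabs_triang.
        replace (4 / r) with (1/r + 1/r + 1/r + 1/r) by (field; lra). lra. }
      replace (8 / r) with (0 + 1/r + 1/r + 1/r + 1/r + 4/r) by (field; lra). lra. }
    unfold PP. fold r in DA.
    replace (27 / r) with (3 / r + 3 * (8 / r)) by (field; lra).
    replace (dens (bgraph pat5 pat5_sym l) m - T 5 (xf x0 x1 x2 x3 x4) (wm pat5 m)) with
      ((dens (bgraph pat5 pat5_sym l) m - T 5 y (wm pat5 m)) + (T 5 y (wm pat5 m) - T 5 (xf x0 x1 x2 x3 x4) (wm pat5 m))) by ring.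
    eapply Rle_trans. apply Rabs_triang. simpl length in DA. lra. }
  intros eps Heps N.
  destruct (INR_unbounded (27 / eps)) as [n1 Hn1].
  set (n := Nat.max (Nat.max N 3) n1).
  destruct (key n ltac:(unfold n; lia)) as [G [HG HGm]].
  exists G. rewrite HG.
  assert (Hn: 27 / INR n <= eps).
  { assert (INR n1 <= INR n) by (apply le_INR; unfold n; lia).
    assert (0 < 27 / eps) by (apply Rdiv_lt_0_compat; lra).
    apply div_le_helper. lra. replace 27 with (27 / eps * eps) at 1 by (field; lra). nra. }
  split. unfold n; lia.
  repeat split; eapply Rle_trans; try apply HGm; lra.
Qed.

Open Scope R_scope.

Lemma PP_gen m x0 x1 x2 x3 x4 : PP m x0 x1 x2 x3 x4 = T 5 (xf x0 x1 x2 x3 x4) (wm pat5 m).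
Proof. reflexivity. Qed.

Lemma F1_d2 s al : PP 2 (s*al) (s*al) (s*(1/2-al)) (s*(1/2-al)) (1-s) = s^3*(3/4 - 3*(3*al^2-4*al^3)).
Proof. unfold PP, T, wm, hh. simpl. field. Qed.

Lemma F1_T s al : PP 1 (s*al) (s*al) (s*(1/2-al)) (s*(1/2-al)) (1-s) + PP 2 (s*al) (s*al) (s*(1/2-al)) (s*(1/2-al)) (1-s)
  = 3/4 * s^2 * (2 - s).
Proof. unfold PP, T, wm, hh. simpl. field. Qed.

Lemma F2_d2 p q : PP 2 0 0 p q (1-p-q) = 3*p*q*(p+q).
Proof. unfold PP, T, wm, hh. simpl. ring. Qed.

Lemma F2_d1 p q : PP 1 0 0 p q (1-p-q) = 6*p*q*(1-p-q).
Proof. unfold PP, T, wm, hh. simpl. ring. Qed.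

Lemma inS12_of x0 x1 x2 x3 x4 d1 d2 : 0 <= x0 -> 0 <= x1 -> 0 <= x2 -> 0 <= x3 -> 0 <= x4 ->
  x0 + x1 + x2 + x3 + x4 = 1 -> PP 1 x0 x1 x2 x3 x4 = d1 -> PP 2 x0 x1 x2 x3 x4 = d2 -> inS12 d1 d2.
Proof. intros. exists (PP 0 x0 x1 x2 x3 x4), (PP 3 x0 x1 x2 x3 x4). subst. apply blow_inS; auto. Qed.

Lemma backward d1 d2 : 0 <= d1 -> 0 <= d2 -> d1 + d2 <= 3/4 -> inS12 d1 d2.
Proof.
  intros Hd1 Hd2 Hs. set (T0 := d1 + d2).
  destruct (IVT_cor (fun s => 3/4*s^2*(2-s) - T0) 0 1) as [s [Hs01 Hseq]].
  { reg. } { lra. } { simpl. unfold T0. nra. }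
  simpl in Hseq.
  destruct (Rle_lt_dec d2 (3/4 * s^3)) as [CA|CB].
  - destruct (IVT_cor (fun al => - (s^3*(3/4 - 3*(3*al^2-4*al^3)) - d2)) 0 (1/2)) as [al [Hal Haleq]].
    { reg. } { lra. }
    { simpl. assert (0 <= s*(s*(s*1))) by (apply Rmult_le_pos; [lra|]; nra). nra. }
    simpl in Haleq.
    apply (inS12_of (s*al) (s*al) (s*(1/2-al)) (s*(1/2-al)) (1-s)); try nra.
    + pose proof (F1_T s al) as FT. pose proof (F1_d2 s al) as F2. simpl in *. unfold T0 in *. nra.
    + rewrite F1_d2. simpl. lra.
  - assert (Hs3: 0 <= s^3) by (simpl; assert (0 <= s*s) by nra; nra).
    set (u := T0 + d2). assert (Hu: 0 < u) by (unfold u, T0; lra).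
    set (sg := 2 * d2 / u).
    assert (Hsgu: sg * u = 2 * d2) by (unfold sg; field; lra).
    assert (Hsg1: sg <= 1).
    { apply (Rmult_le_reg_r u); auto. unfold T0 in *. unfold u in *. lra. }
    assert (Hsgs: s <= sg).
    { apply (Rmult_le_reg_r u); auto. rewrite Hsgu. unfold u, T0 in *.
      assert (E: d1 + d2 = 3/4*s^2*(2-s)) by lra. 
      assert (0 <= (2 - s) * (d2 - 3/4*s^3)) by (apply Rmult_le_pos; lra).
      replace (s * (d1 + d2 + d2)) with (s * (d1 + d2) + s * d2) by ring. rewrite E. simpl in *. nra. }
    assert (Hcub: s^2*(2-s) <= sg^2*(2-sg)).
    { assert (D: sg^2*(2-sg) - s^2*(2-s) = (sg - s)*(sg*(2 - sg - s) + s*(2-s))) by ring.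
      assert (0 <= sg*(2 - sg - s) + s*(2-s)).
      { assert (0 <= sg*(2 - sg - s)) by (apply Rmult_le_pos; lra).
        assert (0 <= s*(2-s)) by (apply Rmult_le_pos; lra). lra. }
      assert (0 <= (sg - s)*(sg*(2 - sg - s) + s*(2-s))) by (apply Rmult_le_pos; lra). lra. }
    assert (HT: s^2*(2-s) = 2*u*(2-sg)/3).
    { unfold u in *. assert (T0 = 3/4*s^2*(2-s)) by lra. 
      apply (Rmult_eq_reg_r 3); [|lra]. unfold T0 in *. 
      replace (2 * (d1 + d2 + d2) * (2 - sg) / 3 * 3) with (2 * (d1+d2+d2) * 2 - 2 * (sg * (d1+d2+d2))) by field.
      unfold u in Hsgu. rewrite Hsgu. lra. }
    assert (Hsq: 2*u/3 <= sg^2).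
    { rewrite HT in Hcub. apply (Rmult_le_reg_r (2 - sg)); [lra|]. lra. }
    set (pi := u / 6).
    set (disc := sg^2 - 4*pi).
    assert (Hdisc: 0 <= disc) by (unfold disc, pi; lra).
    assert (Hsq2: sqrt disc <= sg).
    { destruct (Rle_lt_dec (sqrt disc) sg) as [|Hc]; auto.
      pose proof (sqrt_sqrt disc Hdisc). pose proof (sqrt_pos disc).
      assert (sg*sg < sqrt disc * sqrt disc) by nra. unfold disc, pi in *. simpl in *. nra. }
    pose proof (sqrt_sqrt disc Hdisc). pose proof (sqrt_pos disc).
    set (p := (sg + sqrt disc)/2). set (q := (sg - sqrt disc)/2).
    assert (Hpq: p * q = pi) by (unfold p, q, disc in *; simpl in *; nra).
    assert (Hpq2: p + q = sg) by (unfold p, q; field).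
    apply (inS12_of 0 0 p q (1-p-q)); try lra.
    + unfold p; lra.
    + unfold q; lra.
    + rewrite F2_d1. replace (6*p*q*(1-p-q)) with (6*(p*q)*(1-(p+q))) by ring. rewrite Hpq, Hpq2.
      unfold pi. replace (6 * (u / 6) * (1 - sg)) with (u - sg * u) by field. rewrite Hsgu. unfold u, T0. lra.
    + rewrite F2_d2. replace (3*p*q*(p+q)) with (3*(p*q)*(p+q)) by ring. rewrite Hpq, Hpq2.
      unfold pi. replace (3 * (u / 6) * sg) with (sg * u / 2) by field. rewrite Hsgu. lra.
Qed.


Open Scope R_scope.

Theorem theorem13 (d1 d2 : R) :
  inS12 d1 d2 <-> (0 <= d1 /\ 0 <= d2 /\ d1 + d2 <= 3 / 4).
Proof.
  split.
  - apply forward.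
  - intros [H1 [H2 H3]]. apply backward; auto.
Qed.
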